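(* Fix a positive integer $r$ and a positive integer $s$, and let $x_1,\dots,x_s,y_1,\dots,y_s,X,Y$ be real numbers with $r<x_i\leq y_i$ for all $i\in\{1,\dots,s\}$. If $Y\geq\max(x_1,\dots,x_s)$ and $\displaystyle X\prod_{i=1}^s x_i<Y\prod_{i=1}^s y_i$, then $\displaystyle (X-r)\prod_{i=1}^s(x_i-r)<(Y-r)\prod_{i=1}^s(y_i-r)$. *)

(* Defs.v *)
From mathcomp Require Import all_boot all_order all_algebra.
From mathcomp Require Import reals.

(* Main.v *)
Require Import Defs.
From mathcomp Require Import all_boot all_order all_algebra.
From mathcomp Require Import reals.
From mathcomp Require Import ring lra.
Import Order.TTheory GRing.Theory Num.Theory.
Local Open Scope ring_scope.

Lemma gen (R : realType) (r : R) : 0 <= r -> forall n (x y : 'I_n -> R) (X Y : R),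
  (forall i, r < x i /\ x i <= y i) ->
  (forall i, x i <= Y) ->
  X * \prod_(i < n) x i < Y * \prod_(i < n) y i ->
  (X - r) * \prod_(i < n) (x i - r) < (Y - r) * \prod_(i < n) (y i - r).
Proof.
move=> r0; elim=> [|n IH] x y X Y hxy hY hP.
  by move: hP; rewrite !big_ord0 !mulr1 => h; lra.
move: hP; rewrite !big_ord_recr /=.
set xk := x ord_max; set yk := y ord_max.
have [hxk hyk] := hxy ord_max; have hYk := hY ord_max.
rewrite -/xk -/yk in hxk hyk hYk.
have xk0 : 0 < xk by lra.
have xkn : xk != 0 by rewrite gt_eqF.
set Px := \prod_(i < n) _; set Py := \prod_(i < n) _ => hP.
pose Y' := Y * yk / xk.
have hY' : Y <= Y'.
  rewrite /Y' ler_pdivlMr // ler_pM2l; last by lra.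
  done.
have IH' := IH (fun i => x (widen_ord (leqnSn n) i)) (fun i => y (widen_ord (leqnSn n) i)) X Y'
  (fun i => hxy _) (fun i => le_trans (hY _) hY').
have hP' : X * Px < Y' * Py.
  rewrite /Y' -(ltr_pM2r xk0).
  have -> : Y * yk / xk * Py * xk = Y * (Py * yk).
    by field.
  by rewrite -mulrA.
have H := IH' hP'.
have ppos : 0 < \prod_(i < n) (y (widen_ord (leqnSn n) i) - r).
  by apply: prodr_gt0 => i _; have := hxy (widen_ord (leqnSn n) i); lra.
set Qx := \prod_(i < n) _ in H.
set Qy := \prod_(i < n) _ in H ppos *.
have key : (Y' - r) * (xk - r) <= (Y - r) * (yk - r).
  have hq : Y' * xk = Y * yk by rewrite /Y'; field.
  have h1 : (Y + yk - Y' - xk) * xk = - ((Y - xk) * (yk - xk)).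
    by rewrite !mulrBl mulrDl hq; ring.
  have h2 : Y + yk - Y' - xk <= 0.
    have h3 : 0 <= (Y - xk) * (yk - xk) by apply: mulr_ge0; lra.
    nra.
  have h4 : r * (Y + yk - Y' - xk) <= 0 by apply: mulr_ge0_le0.
  nra.
have : (X - r) * Qx * (xk - r) < (Y' - r) * Qy * (xk - r).
  by rewrite ltr_pM2r ?subr_gt0.
have : (Y' - r) * Qy * (xk - r) <= (Y - r) * (yk - r) * Qy.
  rewrite -mulrA (mulrC Qy) mulrA ler_pM2r //.
move=> A B; rewrite !mulrA -/Qx; apply: (lt_le_trans B); apply: (le_trans A); rewrite -!mulrA (mulrC Qy); lra.
Qed.

Theorem lemma2p1 (R : realType) (r s : nat) (x y : 'I_s -> R) (X Y : R) :
  (0 < r)%N -> (0 < s)%N ->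
  (forall i, r%:R < x i /\ x i <= y i) ->
  (forall i, x i <= Y) ->
  X * \prod_(i < s) x i < Y * \prod_(i < s) y i ->
  (X - r%:R) * \prod_(i < s) (x i - r%:R) < (Y - r%:R) * \prod_(i < s) (y i - r%:R).
Proof.
move=> _ _; apply: gen; exact: ler0n.
Qed.
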